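(* Let $f:\mathbb{R}\to\mathbb{R}$ be $f(y)=\sum_{k=0}^\infty 2^{-k}\|2^{k^2}y\|$, where $\|t\|=\operatorname{dist}(t,\mathbb{Z})$. Then $f$ is continuous and has no $\mathsf{M}$-points. Consequently every monotone subset of the graph of $f$ is meager in the graph, and $f$ has a derivative (finite or infinite) at no point.
   Context: With $\psi(x)=(x,f(x))$ and the Euclidean norm, $y$ is an $\mathsf{M}$-point of $f$ if there are $c\ge1$ and $\varepsilon>0$ with $|\psi(x)-\psi(y)|\le c|\psi(x)-\psi(z)|$ for all $x\in(y-\varepsilon,y)$, $z\in(y,y+\varepsilon)$. A metric space is monotone if there are a linear order $<$ and $c>0$ with $d(x,y)\le c\,d(x,z)$ whenever $x<y<z$. *)

(* Defs.v *)
From Stdlib Require Import Reals Lra.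
From Coquelicot Require Import Coquelicot.
Open Scope R_scope.

(* ||t|| = dist(t, Z): distance from t to the nearest integer.
   frac_part t = t - floor t lies in [0,1), so the nearest integer is
   floor t or floor t + 1. *)
Definition distZ (t : R) : R := Rmin (frac_part t) (1 - frac_part t).

Definition f_term (y : R) (k : nat) : R := / 2 ^ k * distZ (2 ^ (k * k) * y).
Definition takagi_f (y : R) : R := Series (f_term y).

Definition dist2 (p q : R * R) : R :=
  sqrt ((fst p - fst q) ^ 2 + (snd p - snd q) ^ 2).

Definition psi (g : R -> R) (x : R) : R * R := (x, g x).

Definition M_point (g : R -> R) (y : R) : Prop :=
  exists c eps : R, 1 <= c /\ 0 < eps /\
    forall x z : R, y - eps < x < y -> y < z < y + eps ->
      dist2 (psi g x) (psi g y) <= c * dist2 (psi g x) (psi g z).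

Definition graph (g : R -> R) (p : R * R) : Prop := snd p = g (fst p).

Definition strict_linear_order_on (S : R * R -> Prop) (lt : R * R -> R * R -> Prop) : Prop :=
  (forall x, S x -> ~ lt x x) /\
  (forall x y z, S x -> S y -> S z -> lt x y -> lt y z -> lt x z) /\
  (forall x y, S x -> S y -> lt x y \/ x = y \/ lt y x).

Definition monotone_set (S : R * R -> Prop) : Prop :=
  exists (lt : R * R -> R * R -> Prop) (c : R),
    strict_linear_order_on S lt /\ 0 < c /\
    forall x y z, S x -> S y -> S z -> lt x y -> lt y z ->
      dist2 x y <= c * dist2 x z.

Definition closure_in (G A : R * R -> Prop) (p : R * R) : Prop :=
  G p /\ forall r, 0 < r -> exists a, G a /\ A a /\ dist2 p a < r.

Definition interior_in (G B : R * R -> Prop) (p : R * R) : Prop :=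
  G p /\ exists r, 0 < r /\ forall q, G q -> dist2 p q < r -> B q.

Definition nowhere_dense_in (G A : R * R -> Prop) : Prop :=
  forall p, ~ interior_in G (closure_in G A) p.

Definition meager_in (G S : R * R -> Prop) : Prop :=
  exists N : nat -> (R * R -> Prop),
    (forall n, nowhere_dense_in G (N n)) /\
    (forall p, S p -> exists n, N n p).

(* Main.v *)
Require Import Defs.
From Stdlib Require Import Reals Lra Psatz ZArith Classical.
From Coquelicot Require Import Coquelicot.
Open Scope R_scope.

Lemma sqrt_tri a b c d : sqrt ((a+c)^2+(b+d)^2) <= sqrt (a^2+b^2) + sqrt (c^2+d^2).
Proof.
  set (A := sqrt (a^2+b^2)). set (C := sqrt (c^2+d^2)).
  assert (hA0 : 0 <= A) by apply sqrt_pos. assert (hC0 : 0 <= C) by apply sqrt_pos.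
  assert (hA : A*A = a^2+b^2) by (apply sqrt_sqrt; nra).
  assert (hC : C*C = c^2+d^2) by (apply sqrt_sqrt; nra).
  assert (hAC : a*c+b*d <= A*C).
  { destruct (Rle_or_lt (a*c+b*d) 0) as [h|h]. nra.
    assert (hs : (a*c+b*d)*(a*c+b*d) <= (A*C)*(A*C)).
    { replace (A*C*(A*C)) with ((A*A)*(C*C)) by ring. rewrite hA, hC. pose proof (pow2_ge_0 (a*d-b*c)). nra. }
    apply Rsqr_incr_0_var; [unfold Rsqr; lra | nra]. }
  rewrite <- (sqrt_pow2 (A+C)) by lra. apply sqrt_le_1_alt. nra.
Qed.
Lemma dist2_tri p q r : dist2 p r <= dist2 p q + dist2 q r.
Proof. unfold dist2. replace (fst p - fst r) with ((fst p - fst q) + (fst q - fst r)) by ring.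
 replace (snd p - snd r) with ((snd p - snd q) + (snd q - snd r)) by ring. apply sqrt_tri. Qed.
Lemma dist2_sym p q : dist2 p q = dist2 q p.
Proof. unfold dist2. f_equal. ring. Qed.
Lemma abs_le_sqrt a b : Rabs a <= sqrt (a^2+b^2).
Proof. rewrite <- (sqrt_pow2 (Rabs a)) by apply Rabs_pos. apply sqrt_le_1_alt. rewrite pow2_abs. nra. Qed.
Lemma dist2_fst p q : Rabs (fst p - fst q) <= dist2 p q.
Proof. apply abs_le_sqrt. Qed.
Lemma dist2_snd p q : Rabs (snd p - snd q) <= dist2 p q.
Proof. unfold dist2. rewrite Rplus_comm. apply abs_le_sqrt. Qed.
Lemma dist2_le p q : dist2 p q <= Rabs (fst p - fst q) + Rabs (snd p - snd q).
Proof. unfold dist2. rewrite <- (sqrt_pow2 (Rabs _ + Rabs _)) by (pose proof (Rabs_pos (fst p - fst q)); pose proof (Rabs_pos (snd p - snd q)); lra).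
 apply sqrt_le_1_alt. rewrite <- (pow2_abs (fst p - fst q)), <- (pow2_abs (snd p - snd q)).
 pose proof (Rabs_pos (fst p - fst q)); pose proof (Rabs_pos (snd p - snd q)); nra. Qed.
Lemma dist2_pos p q : 0 <= dist2 p q.
Proof. apply sqrt_pos. Qed.

Lemma Z_dich (k n : Z) : IZR k <= IZR n \/ IZR n + 1 <= IZR k.
Proof. destruct (Z.le_gt_cases k n) as [h|h].
 - left. apply IZR_le; lia.
 - right. rewrite <- plus_IZR. apply IZR_le; lia. Qed.

Lemma distZ_le t k : distZ t <= Rabs (t - IZR k).
Proof. unfold distZ, frac_part. destruct (base_Int_part t) as [h1 h2].
 set (n := Int_part t) in *. destruct (Z_dich k n) as [h|h].
 - apply Rle_trans with (t - IZR n). apply Rmin_l. unfold Rabs; destruct Rcase_abs; lra.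
 - apply Rle_trans with (1 - (t - IZR n)). apply Rmin_r. unfold Rabs; destruct Rcase_abs; lra. Qed.

Lemma distZ_ex t : exists m, distZ t = Rabs (t - IZR m).
Proof. unfold distZ, frac_part. destruct (base_Int_part t) as [h1 h2].
 set (n := Int_part t) in *. destruct (Rle_or_lt (t - IZR n) (1 - (t - IZR n))) as [h|h].
 - exists n. rewrite Rmin_left by lra. unfold Rabs; destruct Rcase_abs; lra.
 - exists (n+1)%Z. rewrite Rmin_right by lra. rewrite plus_IZR. unfold Rabs; destruct Rcase_abs; lra. Qed.

Lemma distZ_char t D : (forall k, D <= Rabs (t - IZR k)) -> (exists m, D = Rabs (t - IZR m)) -> distZ t = D.
Proof. intros H [m Hm]. destruct (distZ_ex t) as [m' Hm']. apply Rle_antisym.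
 rewrite Hm. apply distZ_le. rewrite Hm'. apply H. Qed.

Lemma distZ_nonneg t : 0 <= distZ t.
Proof. destruct (distZ_ex t) as [m ->]. apply Rabs_pos. Qed.

Lemma distZ_half t : distZ t <= 1/2.
Proof. unfold distZ. destruct (Rle_or_lt (frac_part t) (1 - frac_part t)).
 apply Rle_trans with (frac_part t). apply Rmin_l. lra.
 apply Rle_trans with (1 - frac_part t). apply Rmin_r. lra. Qed.

Lemma distZ_int k : distZ (IZR k) = 0.
Proof. apply distZ_char. intros; apply Rabs_pos. exists k. rewrite Rminus_diag, Rabs_R0; auto. Qed.

Lemma distZ_shift t k : distZ (t + IZR k) = distZ t.
Proof. apply distZ_char.
 - intros j. replace (t + IZR k - IZR j) with (t - IZR (j - k)) by (rewrite minus_IZR; ring). apply distZ_le.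
 - destruct (distZ_ex t) as [m Hm]. exists (m + k)%Z. rewrite Hm, plus_IZR. f_equal; ring. Qed.

Lemma distZ_opp t : distZ (- t) = distZ t.
Proof. apply distZ_char.
 - intros j. replace (- t - IZR j) with (- (t - IZR (- j))) by (rewrite opp_IZR; ring). rewrite Rabs_Ropp. apply distZ_le.
 - destruct (distZ_ex t) as [m Hm]. exists (- m)%Z. rewrite Hm, opp_IZR.
   rewrite <- Rabs_Ropp. f_equal; ring. Qed.

Lemma distZ_halfint k : distZ (IZR k + 1/2) = 1/2.
Proof. apply distZ_char.
 - intros j. destruct (Z_dich j k); unfold Rabs; destruct Rcase_abs; lra.
 - exists k. unfold Rabs; destruct Rcase_abs; lra. Qed.

Lemma distZ_lip a b : distZ a <= distZ b + Rabs (a - b).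
Proof. destruct (distZ_ex b) as [m Hm]. rewrite Hm.
 apply Rle_trans with (Rabs (a - IZR m)). apply distZ_le.
 replace (a - IZR m) with ((b - IZR m) + (a - b)) by ring. apply Rabs_triang. Qed.

Lemma distZ_lip2 a b : Rabs (distZ a - distZ b) <= Rabs (a - b).
Proof. pose proof (distZ_lip a b). pose proof (distZ_lip b a). rewrite Rabs_minus_sym in H0.
 unfold Rabs at 1; destruct Rcase_abs; lra. Qed.

Lemma geom_bound (a : nat -> R) (C : R) :
  (forall k, 0 <= a k <= C * (/2)^k) ->
  ex_series a /\ 0 <= Series a <= 2 * C.
Proof. intros H.
 assert (hg : is_series (fun k => C * (/2)^k) (C * / (1 - /2))).
 { apply (is_series_scal_l C (fun k => (/2)^k)). apply is_series_geom. rewrite Rabs_pos_eq; lra. }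
 assert (hex : ex_series (fun k => C * (/2)^k)) by (eexists; exact hg).
 assert (ea : ex_series a).
 { apply (ex_series_le a (fun k => C * (/2)^k)); auto. intros n. change (norm (a n)) with (Rabs (a n)).
   destruct (H n). rewrite Rabs_pos_eq; lra. }
 split; auto. split.
 - apply Rle_trans with (Series (fun _ : nat => 0)).
   { rewrite (Series_ext (fun _ : nat => 0) (fun n => 0 * a n)) by (intros; ring).
     rewrite Series_scal_l. lra. }
   apply Series_le. intros n; destruct (H n); lra. auto.
 - apply Rle_trans with (Series (fun k => C * (/2)^k)). apply Series_le; auto.
   rewrite (is_series_unique _ _ hg). replace (1 - /2) with (/2) by lra. rewrite Rinv_inv. lra. Qed.

Lemma f_term_nonneg y k : 0 <= f_term y k.
Proof. unfold f_term. apply Rmult_le_pos. left; apply Rinv_0_lt_compat, pow_lt; lra. apply distZ_nonneg. Qed.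

Lemma f_term_le y k B : distZ (2 ^ (k*k) * y) <= B -> f_term y k <= B * (/2)^k.
Proof. intros h. unfold f_term. rewrite pow_inv. rewrite Rmult_comm. apply Rmult_le_compat_r.
 left; apply Rinv_0_lt_compat, pow_lt; lra. auto. Qed.

Definition Tail (y : R) (N : nat) : R := Series (fun k => f_term y (N + k)).

Lemma tail_bound y N B : (forall k, (N <= k)%nat -> distZ (2 ^ (k*k) * y) <= B) ->
  ex_series (fun k => f_term y (N + k)) /\ 0 <= Tail y N <= 2 * (B * (/2)^N).
Proof. intros H. apply geom_bound. intros k. split. apply f_term_nonneg.
 replace (B * (/2)^N * (/2)^k) with (B * (/2)^(N+k)) by (rewrite pow_add; ring).
 apply f_term_le. apply H. lia. Qed.

Lemma tail_ex y N : ex_series (fun k => f_term y (N + k)).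
Proof. apply (tail_bound y N (1/2)). intros; apply distZ_half. Qed.

Lemma tail_le y N : 0 <= Tail y N <= (/2)^N.
Proof. destruct (tail_bound y N (1/2)) as [_ h]. intros; apply distZ_half. lra. Qed.

Lemma tail_step y N : Tail y N = f_term y N + Tail y (S N).
Proof. unfold Tail. rewrite Series_incr_1 by apply tail_ex. rewrite Nat.add_0_r. f_equal.
 apply Series_ext. intros n. f_equal. lia. Qed.

Lemma tail_ge y N : f_term y N <= Tail y N.
Proof. rewrite tail_step. pose proof (tail_le y (S N)). lra. Qed.

Fixpoint Fp (y : R) (N : nat) : R := match N with O => 0 | S n => Fp y n + f_term y n end.

Lemma f_split y N : takagi_f y = Fp y N + Tail y N.
Proof. induction N as [|N IH]; simpl.
 - unfold takagi_f, Tail. rewrite Rplus_0_l. apply Series_ext. auto.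
 - rewrite IH, tail_step. ring. Qed.

Fixpoint Lb (N : nat) : R := match N with O => 0 | S n => Lb n + 2 ^ (n*n) end.

Lemma f_term_lip a b k : Rabs (f_term a k - f_term b k) <= 2 ^ (k*k) * Rabs (a - b).
Proof. unfold f_term. rewrite <- Rmult_minus_distr_l. rewrite Rabs_mult.
 rewrite Rabs_pos_eq by (left; apply Rinv_0_lt_compat, pow_lt; lra).
 assert (h1 : Rabs (distZ (2 ^ (k * k) * a) - distZ (2 ^ (k * k) * b)) <= 2 ^ (k*k) * Rabs (a - b)).
 { eapply Rle_trans. apply distZ_lip2. rewrite <- Rmult_minus_distr_l, Rabs_mult.
   rewrite (Rabs_pos_eq (2^(k*k))) by (left; apply pow_lt; lra). lra. }
 assert (h2 : / 2 ^ k <= 1). { assert (1 <= 2^k) by (apply pow_R1_Rle; lra). rewrite <- Rinv_1. apply Rinv_le_contravar; lra. }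
 pose proof (Rabs_pos (distZ (2 ^ (k * k) * a) - distZ (2 ^ (k * k) * b))).
 apply Rle_trans with (1 * Rabs (distZ (2 ^ (k * k) * a) - distZ (2 ^ (k * k) * b))).
 apply Rmult_le_compat_r; lra. lra. Qed.

Lemma Fp_lip a b N : Rabs (Fp a N - Fp b N) <= Lb N * Rabs (a - b).
Proof. induction N as [|N IH]; simpl.
 - rewrite Rminus_diag, Rabs_R0. lra.
 - replace (Fp a N + f_term a N - (Fp b N + f_term b N)) with ((Fp a N - Fp b N) + (f_term a N - f_term b N)) by ring.
   eapply Rle_trans. apply Rabs_triang. pose proof (f_term_lip a b N). lra. Qed.

Lemma Lb_bound N : Lb N * 2 ^ (2*N) <= 4 * 2 ^ (N*N).
Proof. induction N as [|N IH].
 - simpl. lra.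
 - simpl Lb. replace (2 * S N)%nat with (S (S (2*N))) by lia.
   replace (S N * S N)%nat with (N*N + S (2*N))%nat by lia.
   rewrite pow_add. 
   change (2 ^ S (S (2*N))) with (2 * (2 * 2 ^ (2*N))).
   change (2 ^ S (2*N)) with (2 * 2 ^ (2*N)).
   assert (h0 : 0 < 2 ^ (N*N)) by (apply pow_lt; lra).
   assert (h1 : 0 < 2 ^ (2*N)) by (apply pow_lt; lra).
   destruct N as [|N].
   + simpl. lra.
   + assert (h4 : 4 <= 2 ^ (2 * S N)).
     { replace (2 * S N)%nat with (S (S (2*N))) by lia. 
       change (2 ^ S (S (2*N))) with (2 * (2 * 2 ^ (2*N))).
       assert (1 <= 2 ^ (2*N)) by (apply pow_R1_Rle; lra). lra. }
     nra. Qed.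

Lemma int_mult N k m : (N <= k)%nat ->
  2 ^ (k*k) * (IZR m * / 2 ^ (N*N)) = IZR (m * 2 ^ (Z.of_nat (k*k - N*N))).
Proof. intros h. rewrite mult_IZR, <- pow_IZR.
 replace (k*k)%nat with (N*N + (k*k - N*N))%nat at 1 by nia.
 rewrite pow_add. assert (0 < 2 ^ (N*N)) by (apply pow_lt; lra). field. lra. Qed.

Lemma tail_per y m N : Tail (y + IZR m * / 2 ^ (N*N)) N = Tail y N.
Proof. unfold Tail. apply Series_ext. intros k. unfold f_term. f_equal.
 rewrite Rmult_plus_distr_l, int_mult by lia. apply distZ_shift. Qed.

Lemma tail_zero N : Tail 0 N = 0.
Proof. destruct (tail_bound 0 N 0) as [_ h].
 intros k _. rewrite Rmult_0_r. rewrite distZ_int. lra. lra. Qed.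

Lemma tail_int m N : Tail (IZR m * / 2 ^ (N*N)) N = 0.
Proof. rewrite <- (Rplus_0_l (IZR m * _)). rewrite tail_per. apply tail_zero. Qed.

Lemma takagi_even y : takagi_f (- y) = takagi_f y.
Proof. unfold takagi_f. apply Series_ext. intros k. unfold f_term. f_equal.
 rewrite <- Ropp_mult_distr_r. apply distZ_opp. Qed.

Lemma Lb_nonneg N : 0 <= Lb N.
Proof. induction N; simpl. lra. pose proof (pow_lt 2 (N*N)). lra. Qed.

Lemma takagi_cont : continuity takagi_f.
Proof. intros x0. unfold continuity_pt, continue_in, limit1_in, limit_in. simpl. unfold R_dist.
 intros eps he.
 destruct (pow_lt_1_zero (/2) ltac:(rewrite Rabs_pos_eq; lra) (eps/4) ltac:(lra)) as [N HN].
 specialize (HN N (le_n N)). rewrite Rabs_pos_eq in HN by (apply pow_le; lra).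
 pose proof (Lb_nonneg N).
 exists (eps / (2 * (Lb N + 1))). split. apply Rdiv_lt_0_compat; lra.
 intros x [_ hx]. rewrite (f_split x N), (f_split x0 N).
 pose proof (tail_le x N). pose proof (tail_le x0 N). pose proof (Fp_lip x x0 N).
 assert (Lb N * Rabs (x - x0) <= eps/2).
 { apply Rle_trans with (Lb N * (eps / (2 * (Lb N + 1)))). apply Rmult_le_compat_l; lra.
   apply Rmult_le_reg_r with (2 * (Lb N + 1)). lra. field_simplify; try lra. }
 replace (Fp x N + Tail x N - (Fp x0 N + Tail x0 N)) with ((Fp x N - Fp x0 N) + (Tail x N - Tail x0 N)) by ring.
 eapply Rle_lt_trans. apply Rabs_triang. 
 assert (Rabs (Tail x N - Tail x0 N) <= (/2)^N) by (unfold Rabs; destruct Rcase_abs; lra). lra. Qed.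

Lemma scale_facts N : (2 <= N)%nat ->
  / 2 ^ (N*N) <= (/2)^N * (/2)^N /\ Lb N * / 2 ^ (N*N) <= 4 * ((/2)^N * (/2)^N) /\
  0 < (/2)^N /\ 0 < / 2 ^ (N*N) /\ 2 ^ (N*N) * / 2 ^ (N*N) = 1.
Proof. intros hN.
 assert (hP : 0 < 2 ^ (N*N)) by (apply pow_lt; lra).
 assert (hQ : 0 < 2 ^ (N+N)) by (apply pow_lt; lra).
 assert (hqq : (/2)^N * (/2)^N = / 2 ^ (N+N)) by (rewrite <- pow_add, pow_inv; auto).
 assert (hle : 2 ^ (N+N) <= 2 ^ (N*N)) by (apply Rle_pow; [lra | nia]).
 rewrite hqq. split; [|split; [|split; [|split]]].
 - apply Rinv_le_contravar; lra.
 - pose proof (Lb_bound N). replace (2*N)%nat with (N+N)%nat in H by lia.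
   apply Rmult_le_reg_r with (2 ^ (N*N)); auto.
   replace (Lb N * / 2 ^ (N * N) * 2 ^ (N * N)) with (Lb N) by (field; lra).
   apply Rmult_le_reg_r with (2 ^ (N+N)); auto.
   replace (4 * / 2 ^ (N + N) * 2 ^ (N * N) * 2 ^ (N + N)) with (4 * 2 ^ (N*N)) by (field; lra). lra.
 - apply pow_lt; lra.
 - apply Rinv_0_lt_compat; auto.
 - field; lra. Qed.

Lemma fterm_N y N : f_term y N = (/2)^N * distZ (2 ^ (N*N) * y).
Proof. unfold f_term. rewrite pow_inv. auto. Qed.

Definition bad (y c eps : R) := exists x z, y - eps < x < y /\ y < z < y + eps /\
  c * dist2 (psi takagi_f x) (psi takagi_f z) < dist2 (psi takagi_f x) (psi takagi_f y).

Lemma case1 y c eps N : 1 <= c -> (2 <= N)%nat -> (/2)^N * (64 + 80*c) < 1 -> (/2)^N < eps/2 ->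
  1/8 <= distZ (2 ^ (N*N) * y) -> bad y c eps.
Proof. intros hc hN hq he ha.
 destruct (scale_facts N hN) as [hD [hL [q0 [D0 PD]]]].
 set (q := (/2)^N) in *. set (D := / 2 ^ (N*N)) in *. set (P := 2 ^ (N*N)) in *.
 destruct (distZ_ex (P * y)) as [m hm].
 pose proof (distZ_half (P*y)).
 set (x := IZR (m - 1) * D). set (z := IZR (m + 1) * D).
 assert (hy : y = (P * y) * D) by (rewrite Rmult_comm, <- Rmult_assoc, (Rmult_comm D), PD; ring).
 assert (hxy : x - y = (IZR m - 1 - P*y) * D) by (unfold x; rewrite minus_IZR, hy at 1; ring).
 assert (hzy : z - y = (IZR m + 1 - P*y) * D) by (unfold z; rewrite plus_IZR, hy at 1; ring).
 assert (hmy : Rabs (P*y - IZR m) <= 1/2) by lra.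
 assert (hm2 : -1/2 <= P*y - IZR m <= 1/2) by (unfold Rabs in hmy; destruct Rcase_abs; lra).
 assert (hxy1 : -2*D <= x - y <= -(1/2)*D) by (rewrite hxy; split; nra).
 assert (hzy1 : (1/2)*D <= z - y <= 2*D) by (rewrite hzy; split; nra).
 assert (hxz : z - x = 2 * D) by (unfold x, z; rewrite plus_IZR, minus_IZR; ring).
 pose proof (Lb_nonneg N).
 assert (hq4 : q <= 1/4).
 { assert (q*64 < 1) by nra. lra. }
 exists x, z. split; [|split]. 
 - split; nra.
 - split; nra.
 - unfold psi. 
   pose proof (dist2_snd (x, takagi_f x) (y, takagi_f y)) as A1. simpl in A1.
   pose proof (dist2_le (x, takagi_f x) (z, takagi_f z)) as A2. simpl in A2.
   rewrite (f_split x N), (f_split y N), (f_split z N) in *.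
   assert (tx : Tail x N = 0) by apply tail_int. assert (tz : Tail z N = 0) by apply tail_int.
   pose proof (tail_ge y N) as ty. rewrite fterm_N in ty. fold P q in ty.
   pose proof (Fp_lip x y N) as l1. pose proof (Fp_lip x z N) as l2.
   rewrite (Rabs_left (x - y)) in l1 by nra. rewrite (Rabs_minus_sym x z), (Rabs_pos_eq (z - x)) in l2 by nra.
   rewrite (Rabs_minus_sym x z), (Rabs_pos_eq (z - x)) in A2 by nra.
   assert (e1 : Lb N * (-(x-y)) <= 8*(q*q)) by nra.
   assert (e2 : Lb N * (z - x) <= 8*(q*q)) by nra.
   rewrite tx, tz in *.
   assert (B1 : q/8 - 8*(q*q) <= Rabs (Fp x N + 0 - (Fp y N + Tail y N))).
   { assert (- (8*(q*q)) <= Fp y N - Fp x N) by (unfold Rabs in l1; destruct Rcase_abs; lra).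
     assert (q * (1/8) <= q * distZ (P*y)) by (apply Rmult_le_compat_l; lra).
     rewrite Rabs_minus_sym. apply Rle_trans with (Fp y N + Tail y N - (Fp x N + 0)); [lra | apply Rle_abs]. }
   assert (B2 : Rabs (Fp x N + 0 - (Fp z N + 0)) <= 8*(q*q)) by (rewrite Rabs_minus_sym; replace (Fp z N + 0 - (Fp x N + 0)) with (- (Fp x N - Fp z N)) by ring; rewrite Rabs_Ropp; lra).
   assert (hz2 : z - x <= 2*(q*q)) by lra.
   assert (c * (10*(q*q)) < q/8 - 8*(q*q)) by nra.
   nra. Qed.

Lemma case2 y c eps N : 1 <= c -> (2 <= N)%nat -> (/2)^N * (64 + 80*c) < 1 -> (/2)^N < eps/2 ->
  (forall k, (N <= k)%nat -> distZ (2 ^ (k*k) * y) < 1/8) -> bad y c eps.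
Proof. intros hc hN hq he hall.
 assert (ha : distZ (2 ^ (N*N) * y) < 1/8) by (apply hall; lia).
 destruct (tail_bound y N (1/8)) as [_ ty]. { intros k hk; left; apply hall; auto. }
 destruct (scale_facts N hN) as [hD [hL [q0 [D0 PD]]]].
 set (q := (/2)^N) in *. set (D := / 2 ^ (N*N)) in *. set (P := 2 ^ (N*N)) in *.
 destruct (distZ_ex (P * y)) as [m hm].
 set (x := IZR (m - 1) * D + 1/2 * D). set (z := x + IZR 1 * D).
 assert (hy : y = (P * y) * D) by (rewrite Rmult_assoc, (Rmult_comm y D), <- Rmult_assoc, PD; ring).
 assert (hxy : x - y = (IZR m - 1/2 - P*y) * D).
 { unfold x; rewrite minus_IZR, hy at 1. field. }
 assert (hzy : z - y = (IZR m + 1/2 - P*y) * D).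
 { unfold z, x. rewrite minus_IZR. rewrite hy at 1; field. }
 assert (hm2 : -1/8 < P*y - IZR m < 1/8) by (rewrite hm in ha; unfold Rabs in ha; destruct Rcase_abs; lra).
 assert (hxy1 : -D <= x - y <= -(1/4)*D) by (rewrite hxy; split; nra).
 assert (hzy1 : (1/4)*D <= z - y <= D) by (rewrite hzy; split; nra).
 assert (hxz : z - x = D) by (unfold z; ring).
 pose proof (Lb_nonneg N).
 assert (hq4 : q <= 1/4).
 { assert (q*64 < 1) by nra. lra. }
 assert (txx : Tail x N >= q / 2).
 { pose proof (tail_ge x N) as t. rewrite fterm_N in t. fold P q in t.
   replace (P * x) with (IZR (m - 1) + 1/2) in t.
   rewrite distZ_halfint in t. lra.
   unfold x. rewrite Rmult_plus_distr_l, <- !Rmult_assoc, !(Rmult_comm P), !Rmult_assoc, PD. field. }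
 assert (tzx : Tail z N = Tail x N) by (unfold z; apply tail_per).
 exists x, z. split; [|split]. 
 - split; nra.
 - split; nra.
 - unfold psi. 
   pose proof (dist2_snd (x, takagi_f x) (y, takagi_f y)) as A1. simpl in A1.
   pose proof (dist2_le (x, takagi_f x) (z, takagi_f z)) as A2. simpl in A2.
   rewrite (f_split x N), (f_split y N), (f_split z N) in *.
   pose proof (Fp_lip x y N) as l1. pose proof (Fp_lip x z N) as l2.
   rewrite (Rabs_left (x - y)) in l1 by nra. rewrite (Rabs_minus_sym x z), (Rabs_pos_eq (z - x)) in l2 by nra.
   rewrite (Rabs_minus_sym x z), (Rabs_pos_eq (z - x)) in A2 by nra.
   assert (e1 : Lb N * (-(x-y)) <= 4*(q*q)) by nra.
   assert (e2 : Lb N * (z - x) <= 4*(q*q)) by nra.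
   rewrite tzx in *.
   assert (B1 : q/4 - 4*(q*q) <= Rabs (Fp x N + Tail x N - (Fp y N + Tail y N))).
   { assert (- (4*(q*q)) <= Fp x N - Fp y N) by (unfold Rabs in l1; destruct Rcase_abs; lra).
     apply Rle_trans with (Fp x N + Tail x N - (Fp y N + Tail y N)); [lra | apply Rle_abs]. }
   assert (B2 : Rabs (Fp x N + Tail x N - (Fp z N + Tail x N)) <= 4*(q*q)) by (replace (Fp x N + Tail x N - (Fp z N + Tail x N)) with (Fp x N - Fp z N) by ring; lra).
   assert (hz2 : z - x <= q*q) by lra.
   assert (c * (5*(q*q)) < q/4 - 4*(q*q)) by nra.
   nra. Qed.

Theorem noM y : ~ M_point takagi_f y.
Proof. intros [c [eps [hc [he H]]]].
 assert (hb : ~ bad y c eps).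
 { intros [x [z [hx [hz hlt]]]]. specialize (H x z hx hz). lra. }
 assert (ht : 0 < Rmin (eps/2) (/ (64 + 80*c))).
 { apply Rmin_pos. lra. apply Rinv_0_lt_compat. lra. }
 destruct (pow_lt_1_zero (/2) ltac:(rewrite Rabs_pos_eq; lra) _ ht) as [N0 HN0].
 assert (good : forall N, (N0 <= N)%nat -> (/2)^N * (64 + 80*c) < 1 /\ (/2)^N < eps/2).
 { intros N hN. specialize (HN0 N hN). rewrite Rabs_pos_eq in HN0 by (apply pow_le; lra).
   split. 2: { pose proof (Rmin_l (eps/2) (/ (64 + 80*c))). lra. }
   pose proof (Rmin_r (eps/2) (/ (64 + 80*c))).
   apply Rmult_lt_reg_r with (/ (64 + 80*c)). apply Rinv_0_lt_compat; lra.
   rewrite Rmult_assoc, Rinv_r by lra. lra. }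
 destruct (classic (exists N1, forall k, (N1 <= k)%nat -> distZ (2 ^ (k*k) * y) < 1/8)) as [[N1 HN1]|hno].
 - apply hb. apply (case2 y c eps (N0 + N1 + 2)); auto. lia. apply good; lia. apply good; lia.
   intros k hk. apply HN1. lia.
 - apply hb. assert (exists k, (N0 + 2 <= k)%nat /\ ~ distZ (2 ^ (k*k) * y) < 1/8) as [k [hk hk2]].
   { apply not_all_not_ex. intros hh. apply hno. exists (N0+2)%nat. intros k hk.
     specialize (hh k). apply NNPP. intros hn. apply hh. split; auto. }
   apply (case1 y c eps k); auto. lia. apply good; lia. apply good; lia. lra. Qed.

Lemma loc0 (P : R -> Prop) : Rbar_locally' (Finite 0) P -> exists d : posreal, forall y, Rabs y < d -> y <> 0 -> P y.
Proof. intros [d H]. exists d. intros y h1 h2. apply H; auto. unfold ball; simpl. unfold AbsRing_ball, abs, minus, plus, opp; simpl. rewrite Ropp_0, Rplus_0_r. auto. Qed.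

Lemma dist2_mono p q r s : Rabs (fst p - fst q) <= Rabs (fst r - fst s) -> Rabs (snd p - snd q) <= Rabs (snd r - snd s) ->
  dist2 p q <= dist2 r s.
Proof. intros h1 h2. unfold dist2. apply sqrt_le_1_alt.
 rewrite <- (pow2_abs (fst p - fst q)), <- (pow2_abs (snd p - snd q)), <- (pow2_abs (fst r - fst s)), <- (pow2_abs (snd r - snd s)).
 pose proof (Rabs_pos (fst p - fst q)). pose proof (Rabs_pos (snd p - snd q)). nra. Qed.

Lemma diffq (g : R -> R) x x' : x' <> x -> g x' - g x = (x' - x) * ((g (x + (x' - x)) - g x) / (x' - x)).
Proof. intros h. replace (x + (x' - x)) with x' by ring. field. lra. Qed.

Lemma deriv_M (g : R -> R) x (l : Rbar) : is_lim (fun h => (g (x + h) - g x) / h) 0 l -> M_point g x.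
Proof. intros Hl. apply is_lim_spec in Hl. set (q := fun h => (g (x + h) - g x) / h) in *.
 destruct l as [r| |]; simpl in Hl.
 - destruct (loc0 _ (Hl (mkposreal 1 Rlt_0_1))) as [d Hd]. simpl in Hd.
   exists (2 + Rabs r), d. split. pose proof (Rabs_pos r). lra. split. apply cond_pos.
   intros x' z hx hz. unfold psi.
   assert (hq : Rabs (q (x' - x)) <= 1 + Rabs r).
   { assert (Rabs (q (x' - x) - r) < 1) by (apply Hd; [rewrite Rabs_left; lra | lra]).
     pose proof (Rabs_triang (q (x' - x) - r) r). replace (q (x' - x) - r + r) with (q (x' - x)) in H0 by ring. lra. }
   eapply Rle_trans. apply dist2_le. simpl.
   pose proof (dist2_fst (x', g x') (z, g z)) as A. simpl in A.
   rewrite (diffq g x x') by lra. fold (q (x' - x)). rewrite Rabs_mult.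
   rewrite (Rabs_left (x' - x)) by lra. rewrite (Rabs_left (x' - z)) in A by lra.
   pose proof (Rabs_pos (q (x' - x))). nra.
 - destruct (loc0 _ (Hl 0)) as [d Hd]. simpl in Hd.
   exists 1, d. split. lra. split. apply cond_pos.
   intros x' z hx hz. unfold psi. rewrite Rmult_1_l.
   assert (h1 : 0 < q (x' - x)) by (apply Hd; [rewrite Rabs_left; lra | lra]).
   assert (h2 : 0 < q (z - x)) by (apply Hd; [rewrite Rabs_pos_eq; lra | lra]).
   assert (e1 : g x' - g x < 0) by (rewrite (diffq g x x') by lra; fold (q (x' - x)); nra).
   assert (e2 : 0 < g z - g x) by (rewrite (diffq g x z) by lra; fold (q (z - x)); nra).
   apply dist2_mono; simpl.
   + rewrite !Rabs_left; lra.
   + rewrite !Rabs_left; lra.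
 - destruct (loc0 _ (Hl 0)) as [d Hd]. simpl in Hd.
   exists 1, d. split. lra. split. apply cond_pos.
   intros x' z hx hz. unfold psi. rewrite Rmult_1_l.
   assert (h1 : q (x' - x) < 0) by (apply Hd; [rewrite Rabs_left; lra | lra]).
   assert (h2 : q (z - x) < 0) by (apply Hd; [rewrite Rabs_pos_eq; lra | lra]).
   assert (e1 : 0 < g x' - g x) by (rewrite (diffq g x x') by lra; fold (q (x' - x)); nra).
   assert (e2 : g z - g x < 0) by (rewrite (diffq g x z) by lra; fold (q (z - x)); nra).
   apply dist2_mono; simpl.
   + rewrite !Rabs_left; lra.
   + rewrite !Rabs_pos_eq; lra. Qed.

Definition Mono (g : R -> R) (S : R * R -> Prop) (lt : R * R -> R * R -> Prop) (c : R) : Prop :=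
  (forall p, S p -> snd p = g (fst p)) /\ strict_linear_order_on S lt /\ 0 < c /\
  (forall x y z, S x -> S y -> S z -> lt x y -> lt y z -> dist2 x y <= c * dist2 x z).

Lemma pt_eq g S lt c a : Mono g S lt c -> S a -> a = (fst a, g (fst a)).
Proof. intros [HG _] ha. destruct a as [a1 a2]. pose proof (HG _ ha) as e; simpl in *. rewrite <- e. auto. Qed.

Lemma pt_eq2 g S lt c a b : Mono g S lt c -> S a -> S b -> fst a = fst b -> a = b.
Proof. intros H ha hb e. rewrite (pt_eq g S lt c a H ha), (pt_eq g S lt c b H hb), e. auto. Qed.

Lemma asym g S lt c a b : Mono g S lt c -> S a -> S b -> lt a b -> lt b a -> False.
Proof. intros [_ [[irr [tr _]] _]] ha hb h1 h2. apply (irr a ha). apply (tr a b a); auto. Qed.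

Lemma tri g S lt c a b : Mono g S lt c -> S a -> S b -> fst a <> fst b -> lt a b \/ lt b a.
Proof. intros H ha hb hne. destruct H as [HG [[irr [tr tri]] _]].
 destruct (tri a b ha hb) as [h|[h|h]]; auto. subst. tauto. Qed.

Lemma side g S lt c u w1 w2 : Mono g S lt c -> S u -> S w1 -> S w2 -> fst w1 <> fst u -> fst w2 <> fst u ->
  (1 + c) * dist2 w1 w2 < dist2 w1 u -> (lt w1 u <-> lt w2 u).
Proof. intros H hu h1 h2 n1 n2 hd. pose proof H as H'. destruct H' as [HG [_ [hc Hm]]].
 pose proof (dist2_pos w1 w2). pose proof (dist2_pos w2 u).
 destruct (tri g S lt c w1 u H h1 hu n1) as [a1|a1]; destruct (tri g S lt c w2 u H h2 hu n2) as [a2|a2].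
 - tauto.
 - exfalso. pose proof (Hm w1 u w2 h1 hu h2 a1 a2). nra.
 - exfalso. pose proof (Hm w2 u w1 h2 hu h1 a2 a1). pose proof (dist2_tri w1 w2 u).
   rewrite (dist2_sym w2 w1) in H2. nra.
 - split; intros h; exfalso; [apply (asym g S lt c w1 u H h1 hu h a1) | apply (asym g S lt c w2 u H h2 hu h a2)]. Qed.

Definition Dens (g : R -> R) (S : R * R -> Prop) (a b : R) : Prop :=
  forall t, a <= t <= b -> forall rho, 0 < rho -> exists p, S p /\ dist2 (t, g t) p < rho.

Lemma chain g S lt c al be u v w m : Mono g S lt c -> Dens g S al be ->
  uniform_continuity g (fun t => al <= t <= be) ->
  S u -> S v -> S w -> al <= fst v -> fst v <= fst w -> fst w <= be -> 0 < m ->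
  (forall t, fst v <= t <= fst w -> m <= Rabs (t - fst u)) -> (lt v u <-> lt w u).
Proof. intros H HD UC hu hv hw h1 h2 h3 hm hdist.
 pose proof H as H'. destruct H' as [HG [_ [hc Hm]]].
 assert (he : 0 < m / (2 * (1 + c))) by (apply Rdiv_lt_0_compat; lra).
 destruct (UC (mkposreal _ he)) as [t0 Ht0]. simpl in Ht0.
 set (tau := Rmin t0 (m / (2 * (1 + c)))).
 assert (htau : 0 < tau) by (apply Rmin_pos; [apply cond_pos | lra]).
 assert (step : forall a b, S a -> S b -> fst v <= fst a <= fst w -> fst v <= fst b <= fst w ->
           Rabs (fst a - fst b) < tau -> (lt a u <-> lt b u)).
 { intros a b ha hb ra rb hab.
   assert (ma : m <= Rabs (fst a - fst u)) by auto.
   assert (mb : m <= Rabs (fst b - fst u)) by auto.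
   apply (side g S lt c u a b H hu ha hb).
   - intros e; rewrite e, Rminus_diag, Rabs_R0 in ma; lra.
   - intros e; rewrite e, Rminus_diag, Rabs_R0 in mb; lra.
   - assert (hg : Rabs (g (fst a) - g (fst b)) < m / (2 * (1 + c))).
     { apply Ht0; try lra. apply Rlt_le_trans with tau; auto. apply Rmin_l. }
     pose proof (dist2_le a b). rewrite (HG a ha), (HG b hb) in H0. simpl in H0.
     pose proof (dist2_fst a u). 
     assert (tau <= m / (2 * (1 + c))) by apply Rmin_r.
     assert (dist2 a b < m / (1 + c)).
     { apply Rle_lt_trans with (Rabs (fst a - fst b) + Rabs (g (fst a) - g (fst b))). auto.
       replace (m / (1 + c)) with (m / (2 * (1 + c)) + m / (2 * (1 + c))) by (field; lra). lra. }
     apply Rlt_le_trans with m; [|lra].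
     apply Rmult_lt_reg_r with (/ (1 + c)). apply Rinv_0_lt_compat; lra.
     replace ((1 + c) * dist2 a b * / (1 + c)) with (dist2 a b) by (field; lra). auto. }
 assert (ind : forall n, forall b, S b -> fst v <= fst b <= fst w -> fst b <= fst v + INR n * tau / 4 -> (lt v u <-> lt b u)).
 { induction n as [|n IH]; intros b hb rb hb2.
   - simpl in hb2. assert (fst b = fst v) by lra. rewrite (pt_eq2 g S lt c b v H hb hv H0). tauto.
   - destruct (Rle_or_lt (fst b) (fst v + INR n * tau / 4)) as [hle|hgt]. apply IH; auto.
     rewrite S_INR in hb2. destruct n as [|n].
     + simpl in hgt. apply step; auto; try lra. rewrite Rabs_left1; simpl in hb2; lra.
     + set (ts := fst v + INR (Datatypes.S n) * tau / 4 - tau / 8).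
       assert (hn1 : 1 <= INR (Datatypes.S n)) by (rewrite S_INR; pose proof (pos_INR n); lra).
       destruct (HD ts ltac:(unfold ts; split; nra) (tau/8) ltac:(lra)) as [a [ha da]].
       pose proof (dist2_fst (ts, g ts) a) as fa. simpl in fa.
       assert (ra : ts - tau/8 < fst a < ts + tau/8) by (unfold Rabs in fa; destruct Rcase_abs; lra).
       unfold ts in ra.
       assert (IHa : lt v u <-> lt a u) by (apply IH; [auto | split; nra | nra]).
       rewrite IHa. apply step; auto. split; nra. unfold Rabs; destruct Rcase_abs; nra. }
 destruct (nfloor_ex ((fst w - fst v) * 4 / tau)) as [n hn].
 { apply Rmult_le_pos. lra. left; apply Rinv_0_lt_compat; lra. }
 apply (ind (Datatypes.S n)); auto. lra.
 rewrite S_INR. destruct hn as [_ hn].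
 assert ((fst w - fst v) * 4 / tau * tau = (fst w - fst v) * 4) by (field; lra).
 nra. Qed.

Lemma chain_sym g S lt c al be u v w : Mono g S lt c -> Dens g S al be ->
  uniform_continuity g (fun t => al <= t <= be) ->
  S u -> S v -> S w -> al <= fst v <= be -> al <= fst w <= be ->
  (fst v < fst u /\ fst w < fst u) \/ (fst u < fst v /\ fst u < fst w) -> (lt v u <-> lt w u).
Proof. intros H HD UC hu hv hw rv rw hs.
 destruct (Rle_or_lt (fst v) (fst w)) as [o|o].
 - destruct hs as [[s1 s2]|[s1 s2]].
   + apply (chain g S lt c al be u v w (fst u - fst w)); auto; try lra.
     intros t ht. rewrite Rabs_left; lra.
   + apply (chain g S lt c al be u v w (fst v - fst u)); auto; try lra.
     intros t ht. rewrite Rabs_pos_eq; lra.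
 - symmetry. destruct hs as [[s1 s2]|[s1 s2]].
   + apply (chain g S lt c al be u w v (fst u - fst v)); auto; try lra.
     intros t ht. rewrite Rabs_left; lra.
   + apply (chain g S lt c al be u w v (fst w - fst u)); auto; try lra.
     intros t ht. rewrite Rabs_pos_eq; lra. Qed.

Lemma le_eps A B : (forall rho, 0 < rho -> A <= B + rho) -> A <= B.
Proof. intros h. destruct (Rle_or_lt A B) as [|hl]; auto. specialize (h ((A - B)/2) ltac:(lra)). lra. Qed.

Lemma approx g S lt c u lx hx lz hz : Mono g S lt c -> S u ->
  (forall t, lx < t < hx -> forall rho, 0 < rho -> exists p, S p /\ dist2 (t, g t) p < rho) ->
  (forall t, lz < t < hz -> forall rho, 0 < rho -> exists p, S p /\ dist2 (t, g t) p < rho) ->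
  (forall a b, S a -> S b -> lx < fst a < hx -> lz < fst b < hz -> dist2 a u <= c * dist2 a b) ->
  forall x z, lx < x < hx -> lz < z < hz -> dist2 (x, g x) u <= c * dist2 (x, g x) (z, g z).
Proof. intros H hu Dx Dz P x z hx' hz'. pose proof H as H'. destruct H' as [HG [_ [hc Hm]]].
 apply le_eps. intros rho hrho.
 set (r := Rmin (Rmin (rho / (1 + 2*c)) (Rmin (x - lx) (hx - x))) (Rmin (z - lz) (hz - z))).
 assert (hr : 0 < r).
 { unfold r. repeat apply Rmin_pos; try lra. apply Rdiv_lt_0_compat; lra. }
 assert (r1 : r <= rho / (1 + 2*c)) by (unfold r; eapply Rle_trans; [apply Rmin_l|]; apply Rmin_l).
 assert (r2 : r <= x - lx) by (unfold r; eapply Rle_trans; [apply Rmin_l|]; eapply Rle_trans; [apply Rmin_r|]; apply Rmin_l).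
 assert (r3 : r <= hx - x) by (unfold r; eapply Rle_trans; [apply Rmin_l|]; eapply Rle_trans; [apply Rmin_r|]; apply Rmin_r).
 assert (r4 : r <= z - lz) by (unfold r; eapply Rle_trans; [apply Rmin_r|]; apply Rmin_l).
 assert (r5 : r <= hz - z) by (unfold r; eapply Rle_trans; [apply Rmin_r|]; apply Rmin_r).
 destruct (Dx x hx' r hr) as [a [ha da]]. destruct (Dz z hz' r hr) as [b [hb db]].
 pose proof (dist2_fst (x, g x) a) as fa. pose proof (dist2_fst (z, g z) b) as fb. simpl in fa, fb.
 assert (ia : lx < fst a < hx) by (unfold Rabs in fa; destruct Rcase_abs; lra).
 assert (ib : lz < fst b < hz) by (unfold Rabs in fb; destruct Rcase_abs; lra).
 pose proof (P a b ha hb ia ib) as pab.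
 pose proof (dist2_tri (x, g x) a u). pose proof (dist2_tri a (x, g x) (z, g z)).
 pose proof (dist2_tri a (z, g z) b). rewrite (dist2_sym a (x, g x)) in H1.
 assert (hab : dist2 a b <= 2 * r + dist2 (x, g x) (z, g z)) by lra.
 assert (hab2 : c * dist2 a b <= c * (2 * r + dist2 (x, g x) (z, g z))) by (apply Rmult_le_compat_l; lra).
 assert (rho * 1 >= r * (1 + 2*c)).
 { apply Rle_ge. replace (rho * 1) with (rho / (1 + 2*c) * (1 + 2*c)) by (field; lra). apply Rmult_le_compat_r; lra. }
 nra. Qed.

Lemma even_dist g a b : (forall t, g (- t) = g t) -> dist2 (psi g a) (psi g b) = dist2 (psi g (- a)) (psi g (- b)).
Proof. intros he. unfold dist2, psi; simpl. rewrite !he. f_equal. ring. Qed.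

Lemma LL g S lt c al be u vL vR : Mono g S lt c -> Dens g S al be ->
  uniform_continuity g (fun t => al <= t <= be) ->
  S u -> S vL -> S vR -> al <= fst vL -> fst vL < fst u -> fst u < fst vR -> fst vR <= be ->
  lt vL u -> lt u vR -> M_point g (fst u).
Proof. intros H HD UC hu hL hR o1 o2 o3 o4 l1 l2. pose proof H as H'. destruct H' as [HG [_ [hc Hm]]].
 set (eps := Rmin (fst u - al) (be - fst u)).
 assert (e1 : eps <= fst u - al) by apply Rmin_l. assert (e2 : eps <= be - fst u) by apply Rmin_r.
 assert (e0 : 0 < eps) by (apply Rmin_pos; lra).
 exists (Rmax c 1), eps. split. apply Rmax_r. split; auto.
 intros x z hx hz. unfold psi. rewrite <- (pt_eq g S lt c u H hu).
 assert (A : dist2 (x, g x) u <= c * dist2 (x, g x) (z, g z)).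
 { apply (approx g S lt c u (fst u - eps) (fst u) (fst u) (fst u + eps)); auto.
   - intros t ht. apply HD. lra.
   - intros t ht. apply HD. lra.
   - intros a b ha hb ia ib. apply Hm; auto.
     + apply (proj1 (chain_sym g S lt c al be u vL a H HD UC hu hL ha ltac:(lra) ltac:(lra) ltac:(left; lra))). auto.
     + destruct (tri g S lt c b u H hb hu ltac:(lra)) as [hh|hh]; auto. exfalso.
       apply (asym g S lt c u vR H hu hR l2).
       apply (proj2 (chain_sym g S lt c al be u vR b H HD UC hu hR hb ltac:(lra) ltac:(lra) ltac:(right; lra))). auto. }
 pose proof (dist2_pos (x, g x) (z, g z)). pose proof (Rmax_l c 1). nra. Qed.

Lemma RR g S lt c al be u vL vR : Mono g S lt c -> Dens g S al be ->
  uniform_continuity g (fun t => al <= t <= be) -> (forall t, g (- t) = g t) ->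
  S u -> S vL -> S vR -> al <= fst vL -> fst vL < fst u -> fst u < fst vR -> fst vR <= be ->
  lt u vL -> lt vR u -> M_point g (- fst u).
Proof. intros H HD UC Hev hu hL hR o1 o2 o3 o4 l1 l2. pose proof H as H'. destruct H' as [HG [_ [hc Hm]]].
 set (eps := Rmin (fst u - al) (be - fst u)).
 assert (e1 : eps <= fst u - al) by apply Rmin_l. assert (e2 : eps <= be - fst u) by apply Rmin_r.
 assert (e0 : 0 < eps) by (apply Rmin_pos; lra).
 exists (Rmax c 1), eps. split. apply Rmax_r. split; auto.
 intros X Z hx hz. rewrite (even_dist g X (- fst u) Hev), (even_dist g X Z Hev), Ropp_involutive.
 unfold psi. rewrite <- (pt_eq g S lt c u H hu).
 assert (A : dist2 (- X, g (- X)) u <= c * dist2 (- X, g (- X)) (- Z, g (- Z))).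
 { apply (approx g S lt c u (fst u) (fst u + eps) (fst u - eps) (fst u)); auto; try lra.
   - intros t ht. apply HD. lra.
   - intros t ht. apply HD. lra.
   - intros a b ha hb ia ib. apply Hm; auto.
     + apply (proj1 (chain_sym g S lt c al be u vR a H HD UC hu hR ha ltac:(lra) ltac:(lra) ltac:(right; lra))). auto.
     + destruct (tri g S lt c b u H hb hu ltac:(lra)) as [hh|hh]; auto. exfalso.
       apply (asym g S lt c u vL H hu hL l1).
       apply (proj2 (chain_sym g S lt c al be u vL b H HD UC hu hL hb ltac:(lra) ltac:(lra) ltac:(left; lra))). auto. }
 pose proof (dist2_pos (- X, g (- X)) (- Z, g (- Z))). pose proof (Rmax_l c 1). nra. Qed.

Lemma nowhere g : continuity g -> (forall t, g (- t) = g t) -> (forall y, ~ M_point g y) ->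
  forall S, (forall p, S p -> graph g p) -> monotone_set S -> nowhere_dense_in (graph g) S.
Proof. intros Hc Hev HM S HS [lt [c [Hord [hc Hm]]]].
 assert (H : Mono g S lt c) by (split; auto).
 intros p [Gp [r [hr Hin]]]. unfold graph in Gp.
 set (t0 := fst p).
 destruct (Hc t0 (r/2) ltac:(lra)) as [e0 [he0 Ce]].
 set (eta := Rmin e0 (r/2)).
 assert (heta : 0 < eta) by (apply Rmin_pos; lra).
 assert (Dn : forall t, Rabs (t - t0) < eta -> forall rho, 0 < rho -> exists a, S a /\ dist2 (t, g t) a < rho).
 { intros t ht rho hrho.
   assert (hg : Rabs (g t - g t0) < r/2).
   { destruct (Req_dec t t0) as [e|ne]. rewrite e, Rminus_diag, Rabs_R0; lra.
     apply (Ce t). split. split. constructor. auto. simpl. unfold R_dist. apply Rlt_le_trans with eta; auto. apply Rmin_l. }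
   assert (Cl : closure_in (graph g) S (t, g t)).
   { apply Hin. unfold graph; simpl; auto.
     eapply Rle_lt_trans. apply dist2_le. simpl. rewrite Gp. fold t0.
     rewrite (Rabs_minus_sym t0 t), (Rabs_minus_sym (g t0) (g t)).
     assert (eta <= r/2) by apply Rmin_r. lra. }
   destruct Cl as [_ Cl]. destruct (Cl rho hrho) as [a [_ [Sa da]]]. eauto. }
 set (al := t0 - eta/2). set (be := t0 + eta/2).
 assert (HD : Dens g S al be).
 { intros t ht. apply Dn. unfold al, be in ht. unfold Rabs; destruct Rcase_abs; lra. }
 assert (UC : uniform_continuity g (fun t => al <= t <= be)).
 { apply Heine. apply compact_P3. intros; apply Hc. }
 destruct (Dn (t0 - eta/4) ltac:(unfold Rabs; destruct Rcase_abs; lra) (eta/8) ltac:(lra)) as [v1 [s1 d1]].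
 destruct (Dn t0 ltac:(rewrite Rminus_diag, Rabs_R0; lra) (eta/8) ltac:(lra)) as [v2 [s2 d2]].
 destruct (Dn (t0 + eta/4) ltac:(unfold Rabs; destruct Rcase_abs; lra) (eta/8) ltac:(lra)) as [v3 [s3 d3]].
 pose proof (fun q => dist2_fst q v1) as f1. pose proof (fun q => dist2_fst q v2) as f2. pose proof (fun q => dist2_fst q v3) as f3.
 specialize (f1 (t0 - eta/4, g (t0 - eta/4))). specialize (f2 (t0, g t0)). specialize (f3 (t0 + eta/4, g (t0 + eta/4))).
 simpl in f1, f2, f3.
 assert (i1 : t0 - 3*eta/8 < fst v1 < t0 - eta/8) by (unfold Rabs in f1; destruct Rcase_abs; lra).
 assert (i2 : t0 - eta/8 < fst v2 < t0 + eta/8) by (unfold Rabs in f2; destruct Rcase_abs; lra).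
 assert (i3 : t0 + eta/8 < fst v3 < t0 + 3*eta/8) by (unfold Rabs in f3; destruct Rcase_abs; lra).
 unfold al, be in *.
 destruct (tri g S lt c v1 v2 H s1 s2 ltac:(lra)) as [a12|a21];
 destruct (tri g S lt c v2 v3 H s2 s3 ltac:(lra)) as [a23|a32].
 - apply (HM (fst v2)). apply (LL g S lt c al be v2 v1 v3); auto; unfold al, be; lra.
 - destruct (tri g S lt c v1 v3 H s1 s3 ltac:(lra)) as [a13|a31].
   + apply (asym g S lt c v2 v3 H s2 s3); auto.
     apply (proj1 (chain_sym g S lt c al be v3 v1 v2 H HD UC s3 s1 s2 ltac:(unfold al, be; lra) ltac:(unfold al, be; lra) ltac:(left; lra))). auto.
   + apply (asym g S lt c v1 v2 H s1 s2); auto.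
     apply (proj2 (chain_sym g S lt c al be v1 v2 v3 H HD UC s1 s2 s3 ltac:(unfold al, be; lra) ltac:(unfold al, be; lra) ltac:(right; lra))). auto.
 - destruct (tri g S lt c v1 v3 H s1 s3 ltac:(lra)) as [a13|a31].
   + apply (asym g S lt c v1 v3 H s1 s3); auto.
     apply (proj1 (chain_sym g S lt c al be v1 v2 v3 H HD UC s1 s2 s3 ltac:(unfold al, be; lra) ltac:(unfold al, be; lra) ltac:(right; lra))). auto.
   + apply (asym g S lt c v1 v3 H s1 s3); auto.
     apply (proj2 (chain_sym g S lt c al be v3 v1 v2 H HD UC s3 s1 s2 ltac:(unfold al, be; lra) ltac:(unfold al, be; lra) ltac:(left; lra))). auto.
 - apply (HM (- fst v2)). apply (RR g S lt c al be v2 v1 v3); auto; unfold al, be; lra. Qed.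

Lemma meager_of g : continuity g -> (forall t, g (- t) = g t) -> (forall y, ~ M_point g y) ->
  forall S, (forall p, S p -> graph g p) -> monotone_set S -> meager_in (graph g) S.
Proof. intros. exists (fun _ => S). split. intros n. apply nowhere; auto. intros p hp. exists O. auto. Qed.

Theorem proposition4p8 :
  continuity takagi_f /\
  (forall y : R, ~ M_point takagi_f y) /\
  (forall S : R * R -> Prop,
      (forall p, S p -> graph takagi_f p) -> monotone_set S -> meager_in (graph takagi_f) S) /\
  (forall x : R, ~ exists l : Rbar,
      is_lim (fun h => (takagi_f (x + h) - takagi_f x) / h) 0 l).
Proof.
  split; [exact takagi_cont|]. split; [exact noM|]. split.
  - apply meager_of. exact takagi_cont. exact takagi_even. exact noM.
  - intros x [l Hl]. apply (noM x). exact (deriv_M takagi_f x l Hl).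
Qed.
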